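(* Let $G=(V,E)$ be a finite graph, $B \subset U \subset V$, and let $f$ be an $\mathcal F_B$-measurable function on $\mathcal S_V$. Let $\tilde V = V_1 \cup V_2$ be the vertex set of the disjoint union $\tilde G$ of two copies of $G$, let $\phi:\tilde V\to\tilde V$ be the natural involution exchanging each $x\in V_1$ with the corresponding vertex of $V_2$, let $U_1$ be $U$ regarded as a subset of $V_1$, and let $A = V_1 \setminus U_1$. For $\tilde\pi \in \mathcal S_{\tilde V}$ let $Q_A(\tilde\pi)$ be the minimal $\tilde\pi$-invariant set containing $A$ which is compatible with $\phi$ (i.e. $\phi(Q_A)=Q_A$). Then, regarding $B$ as a subset of $V_1$, $$\big|\mathbb E_{U}(f(\cdot\oplus\mathrm{id})) - \mathbb E_{V}(f)\big| \leq 2 \|f\|_{\infty}\, \mathbb P_{\tilde V}\big(Q_A \cap B \neq \emptyset \,\big|\, \tilde\pi|_A = \mathrm{id}\big).$$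
   Context: For any finite graph with vertex set $W$ and $U\subset W$, $\mathcal S_U$ is the set of bijections $\pi:U\to U$ with $\pi(x)=x$ or $\{x,\pi(x)\}$ an edge; $\mathbb P_U(\pi)=e^{-\alpha\sum_{x\in U}\mathbb 1\{\pi(x)\neq x\}}/Z(U)$, $\mathbb E_U$ its expectation. For $B\subset V$, $\mathcal F_B$ is the $\sigma$-algebra on $\mathcal S_V$ generated by the values $\pi(x),\pi^{-1}(x)$, $x\in B$. $\pi\oplus\mathrm{id}$ is the extension of $\pi\in\mathcal S_U$ by the identity outside $U$. A set $D$ is $\tilde\pi$-invariant if $\tilde\pi(D)=D$; such a minimal set $Q_A$ exists since intersections of $\tilde\pi$-invariant, $\phi$-compatible sets containing $A$ retain these properties. *)

(* Defs.v *)
From HB Require Import structures.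
From mathcomp Require Import all_boot all_order all_algebra all_fingroup.
From mathcomp Require Import reals sequences exp.
Set Implicit Arguments. Unset Strict Implicit. Unset Printing Implicit Defensive.
Import Order.TTheory GRing.Theory Num.Theory.
Local Open Scope ring_scope.

(* A finite graph is a symmetric irreflexive relation e on a finType T
   (vertex set V = all of T). *)

Section Defs.
Variable R : realType.
Variable T : finType.
Variable e : rel T.

(* S_U, represented through the extension pi ⊕ id: permutations of V fixing
   every vertex outside U and moving each vertex either to itself or to a
   neighbour. *)
Definition Sset (U : {set T}) : {set {perm T}} :=
  [set p : {perm T} | [forall x, (x \notin U) ==> (p x == x)]
                      && [forall x, (p x == x) || e x (p x)]].

Definition wt (alpha : R) (U : {set T}) (p : {perm T}) : R :=
  expR (- alpha * (#|[set x in U | p x != x]|)%:R).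

Definition Zpart (alpha : R) (U : {set T}) : R :=
  \sum_(p in Sset U) wt alpha U p.

Definition Prob (alpha : R) (U : {set T}) (p : {perm T}) : R :=
  wt alpha U p / Zpart alpha U.

Definition Expect (alpha : R) (U : {set T}) (f : {perm T} -> R) : R :=
  \sum_(p in Sset U) Prob alpha U p * f p.

Definition PrEv (alpha : R) (U : {set T}) (E : pred {perm T}) : R :=
  \sum_(p in Sset U | E p) Prob alpha U p.

Definition CondPr (alpha : R) (U : {set T}) (E C : pred {perm T}) : R :=
  PrEv alpha U (predI E C) / PrEv alpha U C.

(* f is F_B-measurable on S_V: f is a function of the values
   pi(x), pi^{-1}(x), x in B, on S_V (the sigma-algebra on the finite set S_V
   generated by these maps). *)
Definition FB_measurable (B : {set T}) (f : {perm T} -> R) : Prop :=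
  forall p q : {perm T}, p \in Sset setT -> q \in Sset setT ->
    (forall x, x \in B -> p x = q x /\ (p^-1)%g x = (q^-1)%g x) -> f p = f q.

Definition supnorm (f : {perm T} -> R) : R :=
  \big[Num.max/0]_(p in Sset setT) `|f p|.

End Defs.

(* Disjoint union of two copies of the graph: V1 = inl, V2 = inr. *)
Definition edge2 (T : finType) (e : rel T) : rel (T + T)%type :=
  fun a b => match a, b with
             | inl x, inl y => e x y
             | inr x, inr y => e x y
             | _, _ => false
             end.

Definition phi (T : finType) (a : (T + T)%type) : (T + T)%type :=
  match a with inl x => inr x | inr x => inl x end.

Definition QA (T : finType) (A : {set (T + T)%type}) (p : {perm (T + T)%type})
  : {set (T + T)%type} :=
  \bigcap_(D : {set (T + T)%type} |
             [&& A \subset D, (p @: D == D)%SET & (@phi T @: D == D)%SET]) D.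

(* Main.v *)
Require Import Defs.
From HB Require Import structures.
From mathcomp Require Import all_boot all_order all_algebra all_fingroup.
From mathcomp Require Import reals sequences exp.
Import Order.TTheory GRing.Theory Num.Theory.
Local Open Scope ring_scope.
From mathcomp Require Import ring lra.
Set Implicit Arguments. Unset Strict Implicit. Unset Printing Implicit Defensive.

Section Aux.
Variable T : finType.
Local Notation W := (T + T)%type.

Lemma phiK : involutive (@phi T). Proof. by case. Qed.
Lemma phi_inj : injective (@phi T). Proof. exact: inv_inj phiK. Qed.

Lemma stable_imset (g : W -> W) (Q : {set W}) : injective g ->
  (forall x, x \in Q -> g x \in Q) -> g @: Q = Q.
Proof.
move=> gi h; apply/eqP; rewrite eqEcard card_imset // leqnn andbT.
by apply/subsetP=> y /imsetP[x xQ ->]; apply: h.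
Qed.

Lemma stable_mem (g : W -> W) (Q : {set W}) : injective g ->
  (forall x, x \in Q -> g x \in Q) -> forall x, (g x \in Q) = (x \in Q).
Proof.
move=> gi h x; rewrite -{1}(stable_imset gi h); exact: mem_imset.
Qed.

Variable A : {set W}.
Implicit Types (p : {perm W}) (x a : W).

Definition fam (p : {perm W}) (D : {set W}) :=
  [&& A \subset D, (p @: D == D)%SET & (@phi T @: D == D)%SET].

Lemma QA_sub p D : fam p D -> QA A p \subset D.
Proof. move=> h; exact: bigcap_inf. Qed.

Lemma QA_memP p x : reflect (forall D, fam p D -> x \in D) (x \in QA A p).
Proof. exact: bigcapP. Qed.

Lemma QA_A p : A \subset QA A p.
Proof.
apply/subsetP=> x xA; apply/QA_memP => D /and3P[/subsetP h _ _]; exact: h.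
Qed.

Lemma QA_p p x : (p x \in QA A p) = (x \in QA A p).
Proof.
apply: (stable_mem (@perm_inj _ p)) => y yQ; apply/QA_memP => D fD.
move/QA_memP: yQ => yQ.
have := fD; case/and3P=> _ /eqP pD _.
by rewrite -pD; apply: imset_f; apply: yQ.
Qed.

Lemma QA_phi p x : (phi x \in QA A p) = (x \in QA A p).
Proof.
apply: (stable_mem phi_inj) => y yQ; apply/QA_memP => D fD.
move/QA_memP: yQ => yQ.
have := fD; case/and3P=> _ _ /eqP pD.
by rewrite -pD; apply: imset_f; apply: yQ.
Qed.

Definition swf (p : {perm W}) (a : W) :=
  if a \in QA A p then p a else phi (p (phi a)).

Lemma swf_inj p : injective (swf p).
Proof.
have H1 a : (swf p a \in QA A p) = (a \in QA A p).
  rewrite /swf; case: ifP => h; first by rewrite QA_p.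
  by rewrite QA_phi QA_p QA_phi h.
move=> a b eab; have := H1 a; rewrite eab H1.
rewrite /swf in eab *; case: ifP eab => ha; case: ifP => hb //.
- by move=> /perm_inj.
- by move=> /phi_inj /perm_inj /phi_inj.
Qed.

Definition sw p : {perm W} := perm (@swf_inj p).

Lemma swE p a : sw p a = swf p a. Proof. exact: permE. Qed.

Lemma sw_in p a : a \in QA A p -> sw p a = p a.
Proof. by move=> h; rewrite swE /swf h. Qed.

Lemma sw_out p a : a \notin QA A p -> sw p a = phi (p (phi a)).
Proof. by move=> h; rewrite swE /swf (negbTE h). Qed.

Lemma QA_sw p : QA A (sw p) = QA A p.
Proof.
set Q := QA A p.
have s1 : QA A (sw p) \subset Q.
  apply: QA_sub; rewrite /fam QA_A /=.
  rewrite (stable_imset (@perm_inj _ _)) ?eqxx /=; last first.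
    by move=> x xQ; rewrite sw_in // QA_p.
  by rewrite (stable_imset phi_inj) // => x xQ; rewrite QA_phi.
apply/eqP; rewrite eqEsubset s1 /=.
apply: QA_sub; rewrite /fam QA_A /=.
rewrite (stable_imset (@perm_inj _ _)) ?eqxx /=; last first.
  move=> x xQ; rewrite -sw_in ?QA_p //; exact: (subsetP s1).
by rewrite (stable_imset phi_inj) // => x xQ; rewrite QA_phi.
Qed.

Lemma swK p : sw (sw p) = p.
Proof.
apply/permP => a; case: (boolP (a \in QA A p)) => h.
  by rewrite sw_in ?QA_sw // sw_in.
by rewrite sw_out ?QA_sw // sw_out ?QA_phi // !phiK.
Qed.

Lemma sw_inj : injective sw. Proof. exact: can_inj swK. Qed.

Lemma sw_cnt p : #|[set x in setT | sw p x != x]| = #|[set x in setT | p x != x]|.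
Proof.
set Q := QA A p.
rewrite -(cardsID Q [set x in setT | sw p x != x]) -(cardsID Q [set x in setT | p x != x]).
congr (_ + _).
  apply: eq_card => x; rewrite !inE; case: (boolP (x \in Q)) => h; last by rewrite !andbF.
  by rewrite sw_in.
have -> : [set x in setT | sw p x != x] :\: Q = @phi T @: ([set x in setT | p x != x] :\: Q).
  rewrite (can2_imset_pre _ phiK phiK); apply/setP => x; rewrite !inE QA_phi.
  case: (boolP (x \in Q)) => h //=.
  by rewrite sw_out // (can2_eq phiK phiK).
by rewrite card_imset //; exact: phi_inj.
Qed.

End Aux.
Arguments phiK {T} x.
Arguments phi_inj {T} [x1 x2].
Section Main.
Variables (R : realType) (T : finType) (e : rel T).
Local Notation W := (T + T)%type.
Implicit Types (p : {perm W}) (s : {perm T}).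

Local Notation S := (Sset (edge2 e) setT).

Lemma edge2_phi a b : edge2 e (phi a) (phi b) = edge2 e a b.
Proof. by case: a; case: b. Qed.

Lemma inS p : (p \in S) = [forall a, (p a == a) || edge2 e a (p a)].
Proof.
rewrite inE; have -> : [forall x, (x \notin [set: W]) ==> (p x == x)].
  by apply/forallP => x; rewrite in_setT.
done.
Qed.

Lemma inSset (U : {set T}) s : (s \in Sset e U) =
  [forall x, (x \notin U) ==> (s x == x)] && [forall x, (s x == x) || e x (s x)].
Proof. by rewrite inE. Qed.

Lemma inSsetT s : (s \in Sset e setT) = [forall x, (s x == x) || e x (s x)].
Proof.
rewrite inSset; have -> : [forall x, (x \notin [set: T]) ==> (s x == x)].
  by apply/forallP => x; rewrite in_setT.
done.
Qed.

Lemma SsetUT (U : {set T}) s : s \in Sset e U -> s \in Sset e setT.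
Proof. by rewrite inSset inSsetT => /andP[]. Qed.

Lemma sw_S (A : {set W}) p : p \in S -> sw A p \in S.
Proof.
rewrite !inS => /forallP h; apply/forallP => a.
case: (boolP (a \in QA A p)) => ha; first by rewrite sw_in //; exact: h.
rewrite sw_out //; have := h (phi a).
have E y : edge2 e a (phi y) = edge2 e (phi a) y by rewrite -edge2_phi phiK.
by rewrite E (can2_eq phiK phiK).
Qed.

Definition lf p x := match p (inl x) with inl y => y | inr _ => x end.
Definition rf p x := match p (inr x) with inr y => y | inl _ => x end.

Lemma lfE p x : p \in S -> p (inl x) = inl (lf p x).
Proof. rewrite inS => /forallP /(_ (inl x)); rewrite /lf; by case: (p (inl x)). Qed.
Lemma rfE p x : p \in S -> p (inr x) = inr (rf p x).
Proof. rewrite inS => /forallP /(_ (inr x)); rewrite /rf; by case: (p (inr x)). Qed.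

Definition lf' p x := if injectiveb (lf p) then lf p x else x.
Definition rf' p x := if injectiveb (rf p) then rf p x else x.
Lemma lf'_inj p : injective (lf' p).
Proof. rewrite /lf'; case: injectiveP => [h|_] x y //; exact: h. Qed.
Lemma rf'_inj p : injective (rf' p).
Proof. rewrite /rf'; case: injectiveP => [h|_] x y //; exact: h. Qed.
Definition left p : {perm T} := perm (@lf'_inj p).
Definition right p : {perm T} := perm (@rf'_inj p).

Lemma leftE p x : injective (lf p) -> left p x = lf p x.
Proof. by move=> h; rewrite permE /lf'; case: injectiveP. Qed.
Lemma rightE p x : injective (rf p) -> right p x = rf p x.
Proof. by move=> h; rewrite permE /rf'; case: injectiveP. Qed.

Lemma leftS p x : p \in S -> p (inl x) = inl (left p x).
Proof.
move=> pS; rewrite leftE ?lfE // => y z h.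
by have /perm_inj [] : p (inl y) = p (inl z) by rewrite !lfE // h.
Qed.
Lemma rightS p x : p \in S -> p (inr x) = inr (right p x).
Proof.
move=> pS; rewrite rightE ?rfE // => y z h.
by have /perm_inj [] : p (inr y) = p (inr z) by rewrite !rfE // h.
Qed.

Definition gf s1 s2 (a : W) : W :=
  match a with inl x => inl (s1 x) | inr x => inr (s2 x) end.
Lemma gf_inj s1 s2 : injective (gf s1 s2).
Proof. by case=> x; case=> y //= [] /perm_inj ->. Qed.
Definition glue s1 s2 : {perm W} := perm (@gf_inj s1 s2).

Lemma glueL s1 s2 : left (glue s1 s2) = s1.
Proof.
have h : lf (glue s1 s2) =1 s1 by move=> x; rewrite /lf permE.
by apply/permP => x; rewrite leftE ?h // => y z; rewrite !h => /perm_inj.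
Qed.
Lemma glueR s1 s2 : right (glue s1 s2) = s2.
Proof.
have h : rf (glue s1 s2) =1 s2 by move=> x; rewrite /rf permE.
by apply/permP => x; rewrite rightE ?h // => y z; rewrite !h => /perm_inj.
Qed.

Lemma glue_lr p : p \in S -> glue (left p) (right p) = p.
Proof.
move=> pS; apply/permP; case=> x; by rewrite permE /= ?leftS ?rightS.
Qed.

Lemma forall_sum (P : pred W) :
  [forall a, P a] = [forall x, P (inl x)] && [forall x, P (inr x)].
Proof.
apply/forallP/andP => [h|[/forallP h1 /forallP h2]]; first by split; apply/forallP.
by case.
Qed.

Variable U : {set T}.
Local Notation A := ((@inl T T) @: (~: U)).

Definition Cset : {set {perm W}} :=
  [set p | (p \in S) && [forall x in A, p x == x]].

Lemma forall_A (P : pred W) :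
  [forall x in A, P x] = [forall x, (x \notin U) ==> P (inl x)].
Proof.
apply/forallP/forallP => h x.
  by apply/implyP => xU; have /implyP := h (inl x); apply; apply: imset_f; rewrite inE.
by apply/implyP => /imsetP[y]; rewrite inE => yU ->; have /implyP := h y; apply.
Qed.

Lemma glue_mem s1 s2 :
  (glue s1 s2 \in Cset) = (s1 \in Sset e U) && (s2 \in Sset e setT).
Proof.
rewrite inE inS forall_sum forall_A inSset inSsetT /=.
under eq_forallb => x do rewrite permE /=.
under [X in _ && X && _]eq_forallb => x do rewrite permE /=.
under [X in _ && X]eq_forallb => x do rewrite permE /=.
by rewrite andbC andbA.
Qed.

Lemma Cset_imset : Cset =
  [set glue s.1 s.2 | s in [pred s : {perm T} * {perm T} |
                          (s.1 \in Sset e U) && (s.2 \in Sset e setT)]].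
Proof.
apply/setP => p; apply/idP/imsetP => [pC|[[s1 s2] /= hs ->]]; last by rewrite glue_mem.
have pS : p \in S by move: pC; rewrite inE => /andP[].
exists (left p, right p); last by rewrite glue_lr.
by rewrite inE /= -glue_mem glue_lr.
Qed.

Lemma sum_Cset (G : {perm W} -> R) :
  \sum_(p in Cset) G p =
  \sum_(s1 in Sset e U) \sum_(s2 in Sset e setT) G (glue s1 s2).
Proof.
rewrite Cset_imset big_imset /=; last first.
  move=> [a b] [c d] _ _ /= h.
  by have := congr1 left h; have := congr1 right h; rewrite !glueL !glueR => -> ->.
by rewrite pair_big_dep.
Qed.

Variable alpha : R.
Local Notation w := (wt alpha (setT : {set W})).

Lemma cntT_glue s1 s2 : #|[set a in setT | glue s1 s2 a != a]| =
  (#|[set x in setT | s1 x != x]| + #|[set x in setT | s2 x != x]|)%N.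
Proof.
rewrite -!sum1_card big_sumType /=.
congr (_ + _)%N; apply: eq_bigl => x; by rewrite !inE permE.
Qed.

Lemma cntU s1 : s1 \in Sset e U ->
  #|[set x in U | s1 x != x]| = #|[set x in setT | s1 x != x]|.
Proof.
rewrite inSset => /andP[/forallP h _]; apply: eq_card => x; rewrite !inE.
case: (boolP (x \in U)) => //= xU; have /implyP := h x; by move=> /(_ xU) ->.
Qed.

Lemma wt_glue s1 s2 : s1 \in Sset e U ->
  w (glue s1 s2) = wt alpha U s1 * wt alpha setT s2.
Proof. by move=> h; rewrite /wt cntT_glue cntU // natrD mulrDr expRD. Qed.

Lemma sumL (F : {perm T} -> R) : \sum_(p in Cset) w p * F (left p) =
  (\sum_(s1 in Sset e U) wt alpha U s1 * F s1) * Zpart e alpha setT.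
Proof.
rewrite sum_Cset big_distrl /=; apply: eq_bigr => s1 h1.
rewrite /Zpart big_distrr /=; apply: eq_bigr => s2 _.
by rewrite wt_glue // glueL mulrAC.
Qed.

Lemma sumR (F : {perm T} -> R) : \sum_(p in Cset) w p * F (right p) =
  Zpart e alpha U * (\sum_(s2 in Sset e setT) wt alpha setT s2 * F s2).
Proof.
rewrite sum_Cset /Zpart big_distrl /=; apply: eq_bigr => s1 h1.
rewrite big_distrr /=; apply: eq_bigr => s2 _.
by rewrite wt_glue // glueR mulrA.
Qed.

Lemma sumD : \sum_(p in Cset) w p = Zpart e alpha U * Zpart e alpha setT.
Proof.
rewrite sum_Cset /Zpart big_distrl /=; apply: eq_bigr => s1 h1.
rewrite big_distrr /=; apply: eq_bigr => s2 _.
by rewrite wt_glue.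
Qed.

Lemma Cset_lr p : p \in Cset -> (left p \in Sset e U) && (right p \in Sset e setT).
Proof.
move=> pC; have pS : p \in S by move: pC; rewrite inE => /andP[].
by rewrite -glue_mem glue_lr.
Qed.

Lemma Cset_sw1 p : p \in Cset -> sw A p \in Cset.
Proof.
rewrite inE => /andP[pS /forallP h]; rewrite inE (sw_S A pS) /=.
apply/forallP => x; apply/implyP => xA.
by rewrite sw_in ?(subsetP (QA_A A p)) //; have /implyP := h x; apply.
Qed.

Lemma Cset_sw p : (sw A p \in Cset) = (p \in Cset).
Proof.
apply/idP/idP; last exact: Cset_sw1.
by move=> /Cset_sw1; rewrite swK.
Qed.

Lemma sw_lr p y : p \in S -> inl y \notin QA A p -> left (sw A p) y = right p y.
Proof.
move=> pS hy; have sS := sw_S A pS.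
have := leftS y sS; rewrite sw_out //= rightS //= => -[] //.
Qed.

End Main.

Lemma Zpos (R : realType) (T : finType) (e : rel T) (alpha : R) (V : {set T}) :
  0 < Zpart e alpha V.
Proof.
have h1 : (1%g : {perm T}) \in Sset e V.
  by rewrite inE; apply/andP; split; apply/forallP => x; rewrite perm1 eqxx ?implybT.
rewrite /Zpart (bigD1 (1%g : {perm T})) //=.
apply: (lt_le_trans (_ : 0 < wt alpha V 1%g)); first exact: expR_gt0.
rewrite lerDl.
by apply: sumr_ge0 => i _; exact: expR_ge0.
Qed.

Lemma ExpectE (R : realType) (T : finType) (e : rel T) (alpha : R) (V : {set T}) F :
  Expect e alpha V F = (\sum_(p in Sset e V) wt alpha V p * F p) / Zpart e alpha V.
Proof.
rewrite /Expect /Prob mulr_suml; apply: eq_bigr => p _; by rewrite mulrAC.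
Qed.


Theorem proposition4p3 (R : realType) (T : finType) (e : rel T)
  (e_sym : symmetric e) (e_irr : irreflexive e)
  (alpha : R) (U B : {set T}) (BU : B \subset U)
  (f : {perm T} -> R) (fmeas : FB_measurable e B f) :
  let A : {set (T + T)%type} := (@inl T T) @: (~: U) in
  `| Expect e alpha U f - Expect e alpha setT f |
    <= 2 * supnorm e f *
       CondPr (edge2 e) alpha setT
         (fun p => QA A p :&: ((@inl T T) @: B) != set0)
         (fun p => [forall x in A, p x == x]).
Proof.
cbv zeta.
set M := supnorm e f.
have fM q : q \in Sset e setT -> `|f q| <= M.
  by move=> h; rewrite /M /supnorm; exact: le_bigmax_cond.
set A' := (@inl T T) @: (~: U).
set C := Cset e U.
pose w := wt alpha (setT : {set (T + T)%type}).
pose E := fun p => QA A' p :&: ((@inl T T) @: B) != set0.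
pose dl := fun p => f (left p) - f (right p).
have ZU := Zpos e alpha U; have ZT := Zpos e alpha setT.
have Dpos : 0 < \sum_(p in C) w p by rewrite sumD mulr_gt0.
have eqN : Expect e alpha U f - Expect e alpha setT f =
    (\sum_(p in C) w p * dl p) / (\sum_(p in C) w p).
  have -> : \sum_(p in C) w p * dl p =
      \sum_(p in C) w p * f (left p) - \sum_(p in C) w p * f (right p).
    by rewrite -sumrB; apply: eq_bigr => p _; rewrite mulrBr.
  rewrite !ExpectE sumL sumR sumD.
  by field; rewrite ?gt_eqF.
have key : \sum_(p in C | ~~ E p) w p * dl p = 0.
  rewrite /dl; under eq_bigr => p _ do rewrite mulrBr.
  rewrite sumrB; apply/eqP; rewrite subr_eq0; apply/eqP.
  rewrite (reindex_inj (@sw_inj _ A')) /=.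
  apply: eq_big => p; last first.
    move=> /andP[]; rewrite /C Cset_sw /E QA_sw -/E -/C => pC nE.
  have pS : p \in Sset (edge2 e) setT by move: pC; rewrite /C /Cset inE => /andP[].
  have hB x : x \in B -> inl x \notin QA A' p.
    move=> xB; apply/negP => h; move: nE; rewrite /E negbK => /eqP nE.
    have : inl x \in QA A' p :&: ((@inl T T) @: B) by rewrite inE h imset_f.
    by rewrite nE inE.
  congr (_ * _); first by rewrite /w /wt sw_cnt.
  apply: fmeas.
  - have /andP[h1 _] := Cset_lr (Cset_sw1 pC); exact: SsetUT h1.
  - by have /andP[_ h2] := Cset_lr pC.
  move=> x xB; split; first by rewrite (sw_lr pS (hB x xB)).
  set y := (right p)^-1%g x.
  have hy : right p y = x by rewrite /y permKV.
  have ny : inl y \notin QA A' p.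
    apply/negP => h; move: (hB x xB); rewrite -QA_phi /= -hy -(rightS _ pS).
    by rewrite QA_p -[inr y]/(phi (inl y)) QA_phi h.
  by rewrite -[in LHS]hy -(sw_lr pS ny) permK.
  by rewrite /C Cset_sw /E QA_sw.
have eqC : CondPr (edge2 e) alpha setT E (fun p => [forall x in A', p x == x]) =
    (\sum_(p in C | E p) w p) / (\sum_(p in C) w p).
  rewrite /CondPr /PrEv /Prob -!mulr_suml.
  have -> : \sum_(p in Sset (edge2 e) setT | predI E (fun p => [forall x in A', p x == x]) p) wt alpha setT p = \sum_(p in C | E p) w p.
    apply: eq_bigl => p; rewrite /C /Cset !inE /=.
    by case: (E p); rewrite /= ?andbT ?andbF.
  have -> : \sum_(p in Sset (edge2 e) setT | [forall x in A', p x == x]) wt alpha setT p = \sum_(p in C) w p.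
    apply: eq_bigl => p; rewrite /C /Cset !inE.
    reflexivity.
  have Zp := Zpos (edge2 e) alpha setT.
  by field; rewrite ?gt_eqF.
rewrite -/E eqC eqN (bigID E) /= key addr0.
have Di : 0 < (\sum_(p in C) w p)^-1 by rewrite invr_gt0.
rewrite normrM (ger0_norm (ltW Di)) mulrA ler_pM2r //.
rewrite mulr_sumr; apply: le_trans (ler_norm_sum _ _ _) _.
apply: ler_sum => p /andP[pC _].
rewrite normrM ger0_norm ?expR_ge0 // mulrC; apply: ler_wpM2r; first exact: expR_ge0.
have /andP[h1 h2] := Cset_lr pC.
apply: le_trans (ler_normB _ _) _; rewrite mulr_natl mulr2n lerD ?fM //; exact: SsetUT h1.
Qed.
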